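(* If $G$ is a finite simple graph in which every unit sphere $S(x)$ belongs to $\mathcal{S}_2$ (a three-dimensional geometric graph without boundary), then $\chi(G)=0$.
   Context: For a vertex $x$, the unit sphere $S(x)$ is the subgraph induced by the neighbors of $x$. A graph is contractible if it is $K_1$, or, inductively, if there is a vertex $x$ such that both $S(x)$ and the subgraph induced by $V\setminus\{x\}$ are contractible. Let $\mathcal{G}_0$ be the class of graphs without edges, $\mathcal{S}_0$ those with exactly two vertices, $\mathcal{B}_0$ those with exactly one vertex. For $d\ge1$: $\mathcal{G}_d$ is the class of graphs in which every $S(x)$ lies in $\mathcal{S}_{d-1}\cup\mathcal{B}_{d-1}$, with boundary $\delta G$ induced by vertices $x$ with $S(x)\in\mathcal{B}_{d-1}$ and nonempty interior; $\mathcal{B}_d$ is the class of contractible graphs in $\mathcal{G}_d$ with boundary in $\mathcal{S}_{d-1}$; $\mathcal{S}_d$ is the class of non-contractible graphs in $\mathcal{G}_d$ such that removing any single vertex yields a graph in $\mathcal{B}_d$. The Euler characteristic is $\chi(G)=\sum_{k\ge0}(-1)^k v_k$, where $v_k$ is the number of complete subgraphs $K_{k+1}$ of $G$. *)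

(* Defs.v *)
From mathcomp Require Import all_boot all_algebra.
Set Implicit Arguments. Unset Strict Implicit. Unset Printing Implicit Defensive.
Import GRing.Theory Num.Theory.

(* A finite simple graph is a symmetric irreflexive relation e on a finType T.
   All graphs considered are induced subgraphs, represented by vertex sets. *)
Section Graphs.
Variables (T : finType) (e : rel T).

Definition sphere (A : {set T}) (x : T) : {set T} := [set y in A | e x y].

(* contractibility, by recursion with fuel (fuel #|A| suffices) *)
Fixpoint contr_rec (n : nat) (A : {set T}) : bool :=
  match n with
  | 0 => false
  | n'.+1 => (#|A| == 1) ||
      [exists x in A, contr_rec n' (sphere A x) && contr_rec n' (A :\ x)]
  end.
Definition contractible (A : {set T}) : bool := contr_rec #|A| A.

Definition no_edges (A : {set T}) : bool :=
  [forall x in A, forall y in A, ~~ e x y].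

(* SB d = (membership in S_d, membership in B_d) *)
Fixpoint SB (d : nat) : ({set T} -> bool) * ({set T} -> bool) :=
  match d with
  | 0 => (fun A : {set T} => no_edges A && (#|A| == 2), fun A : {set T} => no_edges A && (#|A| == 1))
  | d'.+1 =>
    let: (S', B') := SB d' in
    let G := fun A : {set T} => [forall x in A, S' (sphere A x) || B' (sphere A x)]
                      && [exists x in A, ~~ B' (sphere A x)] in
    let bd := fun A : {set T} => [set x in A | B' (sphere A x)] in
    let B := fun A : {set T} => [&& contractible A, G A & S' (bd A)] in
    (fun A : {set T} => [&& G A, ~~ contractible A & [forall x in A, B (A :\ x)]], B)
  end.

Definition inS (d : nat) (A : {set T}) : bool := (SB d).1 A.
Definition inB (d : nat) (A : {set T}) : bool := (SB d).2 A.

Definition clique (C : {set T}) : bool :=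
  [forall x in C, forall y in C, (x != y) ==> e x y].

(* v_k = number of complete subgraphs K_{k+1} of the graph induced by A *)
Definition vcount (A : {set T}) (k : nat) : nat :=
  #|[set C : {set T} | [&& C \subset A, clique C & #|C| == k.+1]]|.

Definition euler_char (A : {set T}) : int :=
  \sum_(k < #|A|) ((-1) ^+ k * (vcount A k)%:Z)%R.
End Graphs.

(* Main.v *)
Require Import Defs.
From mathcomp Require Import all_boot all_algebra.
From mathcomp Require Import zify ring.
Set Implicit Arguments. Unset Strict Implicit. Unset Printing Implicit Defensive.
Import GRing.Theory Num.Theory.

Section S.
Variables (T : finType) (e : rel T).
Hypotheses (esym : symmetric e) (eirr : irreflexive e).

Definition N (A : {set T}) n :=
  #|[set C : {set T} | [&& C \subset A, clique e C & #|C| == n]]|.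

Lemma vcountN A k : vcount e A k = N A k.+1.
Proof. by []. Qed.

Lemma N_big (A : {set T}) n : #|A| < n -> N A n = 0.
Proof.
move=> h; apply/eqP; rewrite cards_eq0; apply/eqP/setP=> C; rewrite !inE.
apply/negbTE; apply/negP=> /and3P[sCA _ /eqP cC].
by have := subset_leq_card sCA; rewrite cC leqNgt h.
Qed.

Lemma N0 (A : {set T}) : N A 0 = 1.
Proof.
rewrite /N (_ : [set C | _] = [set set0]) ?cards1 //.
apply/setP=> C; rewrite !inE cards_eq0; apply/idP/idP.
  by case/and3P.
move/eqP->; rewrite sub0set eqxx andbT; apply/forall_inP=> x; by rewrite inE.
Qed.

Lemma clique_ins (A : {set T}) x (D : {set T}) : x \in A ->
  (D \subset sphere e A x) && clique e D =
  [&& x |: D \subset A, clique e (x |: D) & x \notin D].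
Proof.
move=> xA; apply/idP/idP.
  case/andP=> sD cD.
  have xD : x \notin D.
    apply/negP=> /(subsetP sD); by rewrite inE eirr andbF.
  rewrite xD andbT subUset sub1set xA /=; apply/andP; split.
    apply/subsetP=> y /(subsetP sD); by rewrite inE => /andP[].
  apply/forall_inP=> y; rewrite in_setU1 => hy; apply/forall_inP=> z.
  rewrite in_setU1 => hz.
  case/orP: hy => [/eqP ->|yD]; case/orP: hz => [/eqP ->|zD]; apply/implyP=> nyz.
  - by rewrite eqxx in nyz.
  - by move: (subsetP sD z zD); rewrite inE => /andP[].
  - by move: (subsetP sD y yD); rewrite inE esym => /andP[].
  - by move/forall_inP: cD => /(_ y yD) /forall_inP /(_ z zD) /implyP; apply.
case/and3P=> sA cD xD; apply/andP; split.
  apply/subsetP=> y yD; rewrite inE (subsetP sA) ?in_setU1 ?yD ?orbT //=.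
  move/forall_inP: cD => /(_ x (setU11 _ _)) /forall_inP /(_ y).
  rewrite in_setU1 yD orbT => /(_ isT) /implyP; apply.
  by apply/eqP=> exy; rewrite exy yD in xD.
apply/forall_inP=> y yD; apply/forall_inP=> z zD.
move/forall_inP: cD => /(_ y); rewrite in_setU1 yD orbT => /(_ isT) /forall_inP.
by apply; rewrite in_setU1 zD orbT.
Qed.

Lemma card_containing (A : {set T}) x n : x \in A ->
  #|[set C : {set T} | [&& C \subset A, clique e C & #|C| == n.+1] & x \in C]|
  = N (sphere e A x) n.
Proof.
move=> xA; rewrite /N.
set Q := [set D : {set T} | [&& D \subset sphere e A x, clique e D & #|D| == n]].
rewrite -(@card_in_imset _ _ (fun D => x |: D) Q).
  apply: eq_card=> C; rewrite !inE; apply/idP/imsetP.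
    case/andP=> /and3P[sCA cC cardC] xC; exists (C :\ x).
      rewrite /Q inE.
      have /andP[h1 h2] : (C :\ x \subset sphere e A x) && clique e (C :\ x).
        by rewrite clique_ins // setD11 setD1K // sCA cC.
      by rewrite h1 h2 /=; move: cardC; rewrite (cardsD1 x C) xC add1n eqSS.
    by rewrite setD1K.
  case=> D; rewrite /Q inE => /and3P[h1 h2 cardD] ->.
  have: (D \subset sphere e A x) && clique e D by rewrite h1 h2.
  rewrite clique_ins // => /and3P[sA cD xD].
  by rewrite sA cD setU11 cardsU1 xD (eqP cardD) /= andbT.
move=> D1 D2; rewrite /Q !inE => /and3P[a1 b1 _] /and3P[a2 b2 _] h.
have: (D1 \subset sphere e A x) && clique e D1 by rewrite a1 b1.
have: (D2 \subset sphere e A x) && clique e D2 by rewrite a2 b2.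
rewrite !clique_ins // => /and3P[_ _ x2] /and3P[_ _ x1].
by rewrite -(setU1K x1) -(setU1K x2) h.
Qed.

Lemma count_pairs (U : finType) (A : {set U}) (P : {set {set U}}) :
  (forall C, C \in P -> C \subset A) ->
  \sum_(x in A) #|[set C in P | x \in C]| = \sum_(C in P) #|C|.
Proof.
move=> sub.
transitivity (\sum_(x in A) \sum_(C in P) (x \in C : nat)).
  apply: eq_bigr => x _; rewrite -sum1_card.
  rewrite (eq_bigl (fun C => (C \in P) && (x \in C))); last by move=> C; rewrite !inE.
  by rewrite big_mkcondr; apply: eq_bigr => C _; case: (x \in C).
rewrite exchange_big; apply: eq_bigr => C CP.
rewrite -big_mkcondr -sum1_card; apply: eq_bigl => x.
by case xC: (x \in C); rewrite ?andbF // andbT (subsetP (sub C CP)).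
Qed.

Lemma N_remove (A : {set T}) x n : x \in A ->
  N A n.+1 = N (A :\ x) n.+1 + N (sphere e A x) n.
Proof.
move=> xA; rewrite -card_containing // /N -(cardsID [set C : {set T} | x \in C]) addnC.
congr (_ + _); apply: eq_card => C; rewrite !inE.
  by rewrite subsetD1 -!andbA; case: (x \in C); rewrite ?andbF // ?andbT.
by rewrite -!andbA.
Qed.

Lemma N_link (A : {set T}) n :
  \sum_(x in A) N (sphere e A x) n = n.+1 * N A n.+1.
Proof.
set P := [set C : {set T} | [&& C \subset A, clique e C & #|C| == n.+1]].
rewrite (eq_bigr (fun x => #|[set C in P | x \in C]|)); last first.
  move=> x xA; rewrite -card_containing //; apply: eq_card => C; by rewrite !inE.
rewrite count_pairs; last by move=> C; rewrite inE => /and3P[].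
rewrite (eq_bigr (fun _ => n.+1)); last by move=> C; rewrite inE => /and3P[_ _ /eqP].
by rewrite sum_nat_const mulnC.
Qed.

Local Open Scope ring_scope.

Definition E m (A : {set T}) : int :=
  \sum_(0 <= k < m) ((-1) ^+ k * (N A k.+1)%:Z).

Lemma euler_E (A : {set T}) : euler_char e A = E #|A| A.
Proof. by rewrite /E big_mkord. Qed.

Lemma E_ext (A : {set T}) m : (#|A| <= m)%N -> E m A = euler_char e A.
Proof.
move=> h; rewrite euler_E /E (@big_cat_nat _ _ _ #|A|) //=.
rewrite [X in _ + X]big1_seq; first by rewrite addr0.
move=> k /andP[_]; rewrite mem_index_iota => /andP[hk _].
by rewrite N_big ?ltnS // mulr0.
Qed.

Lemma sphere_sub (A : {set T}) x : sphere e A x \subset A :\ x.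
Proof.
apply/subsetP=> y; rewrite !inE => /andP[yA exy]; rewrite yA andbT.
by apply/eqP=> yx; rewrite yx eirr in exy.
Qed.

Lemma euler_remove (A : {set T}) x : x \in A ->
  euler_char e A = euler_char e (A :\ x) + 1 - euler_char e (sphere e A x).
Proof.
move=> xA.
have cA : #|A| = (#|A :\ x|).+1 by rewrite (cardsD1 x A) xA.
have cS : (#|sphere e A x| <= #|A :\ x|)%N by apply: subset_leq_card; apply: sphere_sub.
rewrite euler_E -(E_ext (leqnSn #|A :\ x|)) -(E_ext cS) /E cA.
rewrite (eq_bigr (fun k => (-1) ^+ k * (N (A :\ x) k.+1)%:Z + (-1) ^+ k * (N (sphere e A x) k)%:Z)); last first.
  by move=> k _; rewrite (N_remove _ xA) PoszD mulrDr.
rewrite big_split /= -addrA; congr (_ + _).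
rewrite big_nat_recl // expr0 mul1r N0 -sumrN; congr (_ + _).
by apply: eq_bigr => k _; rewrite exprS mulN1r mulNr.
Qed.

Lemma euler_set0 : euler_char e set0 = 0.
Proof. by rewrite /euler_char cards0 big_ord0. Qed.

Lemma contr_euler n (A : {set T}) : contr_rec e n A -> euler_char e A = 1.
Proof.
elim: n A => [//|n IH] A /= /orP[/cards1P[x Ax]|/exists_inP[x xA /andP[h1 h2]]].
  have xA : x \in A by rewrite Ax set11.
  rewrite (euler_remove xA).
  have -> : A :\ x = set0 by rewrite Ax setDv.
  have -> : sphere e A x = set0.
    have h := sphere_sub A x; rewrite {2}Ax setDv in h.
    by apply/eqP; rewrite -subset0.
  by rewrite euler_set0 add0r subr0.
by rewrite (euler_remove xA) (IH _ h1) (IH _ h2) addrK.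
Qed.

Lemma euler_zero (A : {set T}) : (forall k, (4 < k)%N -> N A k = 0%N) ->
  euler_char e A = (N A 1)%:Z - (N A 2)%:Z + (N A 3)%:Z - (N A 4)%:Z.
Proof.
move=> h; rewrite -(E_ext (leq_addr 4 #|A|)) /E (@big_cat_nat _ _ _ 4) //=; last by rewrite leq_addl.
rewrite [X in _ + X]big1_seq ?addr0; last first.
  by move=> k /andP[_]; rewrite mem_index_iota => /andP[hk _]; rewrite h ?mulr0.
rewrite !big_nat_recl // big_geq // addr0 /=.
rewrite (_ : (-1) ^+ 0 = 1 :> int) // (_ : (-1) ^+ 1 = -1 :> int) // (_ : (-1) ^+ 2 = 1 :> int) // (_ : (-1) ^+ 3 = -1 :> int) // !mul1r !mulN1r.
by rewrite !addrA.
Qed.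

Lemma inSS d (A : {set T}) : inS e d.+1 A =
  [&& [forall x in A, inS e d (sphere e A x) || inB e d (sphere e A x)]
      && [exists x in A, ~~ inB e d (sphere e A x)],
      ~~ contractible e A & [forall x in A, inB e d.+1 (A :\ x)]].
Proof. by rewrite /inS /inB /=; case: (SB e d). Qed.

Lemma inBS d (A : {set T}) : inB e d.+1 A -> contractible e A.
Proof. by rewrite /inB /=; case: (SB e d) => S' B' /= /andP[]. Qed.

Lemma inB_euler d (A : {set T}) : inB e d A -> euler_char e A = 1.
Proof.
case: d => [|d]; last by move/inBS/contr_euler.
rewrite /inB /= => /andP[_ h]; apply: (@contr_euler 1); by rewrite /= h.
Qed.

Lemma N1 (A : {set T}) : N A 1 = #|A|.
Proof.
have := N_link A 0; rewrite (eq_bigr (fun _ => 1%N)); last by move=> x _; rewrite N0.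
by rewrite sum1_card mul1n.
Qed.

Lemma noedge_N (A : {set T}) k : no_edges e A -> (1 < k)%N -> N A k = 0%N.
Proof.
move=> /forall_inP ne hk; apply/eqP; rewrite cards_eq0; apply/eqP/setP=> C; rewrite !inE.
apply/negbTE/negP=> /and3P[sCA cC /eqP cardC].
have : (1 < #|C|)%N by rewrite cardC.
case/card_gt1P=> x [y [xC yC nxy]].
move/forall_inP: cC => /(_ x xC) /forall_inP /(_ y yC) /implyP /(_ nxy) exy.
by move: (ne x (subsetP sCA x xC)) => /forall_inP /(_ y (subsetP sCA y yC)); rewrite exy.
Qed.

Lemma sign_cases d : (-1) ^+ d = 1 :> int \/ (-1) ^+ d = -1 :> int.
Proof. by rewrite -signr_odd; case: (odd d); [right|left]. Qed.

Lemma classify d : forall A : {set T}, inS e d A ->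
  euler_char e A = 1 + (-1) ^+ d /\
  ((0 < d)%N -> forall x, x \in A -> inS e d.-1 (sphere e A x)).
Proof.
elim: d => [|d IH] A.
  rewrite /inS /= => /andP[ne /eqP c2]; split=> [|//].
    rewrite euler_zero => [|k hk]; last by rewrite noedge_N // (ltn_trans _ hk).
    by rewrite N1 c2 !noedge_N.
rewrite inSS => /and3P[/andP[/forall_inP hG /exists_inP[x0 x0A nB]] _ /forall_inP hR].
have ex0 : euler_char e A = 1 + (-1) ^+ d.+1.
  have hS : inS e d (sphere e A x0) by move: (hG x0 x0A); rewrite (negbTE nB) orbF.
  rewrite (euler_remove x0A) (inB_euler (hR x0 x0A)) (IH _ hS).1 exprS mulN1r.
  by rewrite opprD addrA addrK.
split=> // _ x xA /=.
case/orP: (hG x xA) => // hB; exfalso.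
move: ex0; rewrite (euler_remove xA) (inB_euler (hR x xA)) (inB_euler hB) addrK.
by case: (sign_cases d.+1) => ->.
Qed.

Local Close Scope ring_scope.
Lemma level1 (Y : {set T}) : inS e 1 Y ->
  N Y 2 = #|Y| /\ (forall k, (2 < k)%N -> N Y k = 0%N).
Proof.
move=> hY; have [_ hs] := classify hY; have {}hs := hs isT.
have h0 z : z \in Y -> no_edges e (sphere e Y z) && (#|sphere e Y z| == 2%N).
  by move/hs; rewrite /inS.
split.
  have := N_link Y 1; rewrite (eq_bigr (fun _ => 2%N)); last first.
    by move=> z /h0 /andP[_ /eqP c]; rewrite N1.
  rewrite sum_nat_const; lia.
move=> k hk; have := N_link Y k.-1; rewrite big1; last first.
  by move=> z /h0 /andP[ne _]; rewrite noedge_N //; case: k hk => [|[|[|k]]].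
have -> : k.-1.+1 = k by case: k hk.
nia.
Qed.

Lemma level2 (X : {set T}) : inS e 2 X ->
  (forall k, (3 < k)%N -> N X k = 0%N) /\ (2 * N X 2 = 3 * N X 3)%N /\
  (2 * N X 1 = 4 + N X 3)%N.
Proof.
move=> hX; have [eX hs] := classify hX; have {}hs := hs isT.
have h4 : forall k, (3 < k)%N -> N X k = 0%N.
  move=> k hk; have := N_link X k.-1; rewrite big1; last first.
    move=> y /hs /level1 [_ ->] //; by case: k hk => [|[|[|[|k]]]].
  have -> : k.-1.+1 = k by case: k hk.
  nia.
have h23 : (2 * N X 2 = 3 * N X 3)%N.
  rewrite -(N_link X 1) -(N_link X 2); apply: eq_bigr => y /hs /level1 [-> _].
  by rewrite N1.
split=> //; split=> //.
rewrite euler_zero in eX; last by move=> k hk; apply: h4; apply: ltn_trans hk.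
rewrite (h4 4%N) // in eX; move: eX h23; rewrite (_ : ((-1) ^+ 2 = 1 :> int)%R) //.
move=> h1 h2; have h3 : (N X 1 + N X 3 = 2 + N X 2)%N.
  have: ((N X 1)%:Z + (N X 3)%:Z - (2 + (N X 2)%:Z) = 0)%R.
    by rewrite -[X in (_ - (X + _))%R]h1; ring.
  by move/eqP; rewrite subr_eq0 -!PoszD => /eqP [].
lia.
Qed.

Lemma main_aux : (forall x : T, inS e 2 (sphere e [set: T] x)) ->
  euler_char e [set: T] = 0%R.
Proof.
move=> hx; set G := [set: T].
have L x := level2 (hx x).
have h5 : forall k, (4 < k)%N -> N G k = 0%N.
  move=> k hk; have := N_link G k.-1; rewrite big1; last first.
    move=> x _; have [h _] := L x; apply: h; by case: k hk => [|[|[|[|[|k]]]]].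
  have -> : k.-1.+1 = k by case: k hk.
  nia.
have s1 : (2 * (2 * N G 2) = 4 * N G 1 + 4 * N G 4)%N.
  rewrite -(N_link G 1) -(N_link G 3) N1 big_distrr /=.
  rewrite (eq_bigr (fun x => 4 + N (sphere e G x) 3))%N; last first.
    by move=> x _; have [_ [_ ->]] := L x.
  by rewrite big_split sum_nat_const /= mulnC.
have s2 : (2 * (3 * N G 3) = 3 * (4 * N G 4))%N.
  rewrite -(N_link G 2) -(N_link G 3) !big_distrr /=.
  by apply: eq_bigr => x _; have [_ [-> _]] := L x.
rewrite euler_zero //.
have e2 : N G 2 = (N G 1 + N G 4)%N by lia.
have e3 : N G 3 = (2 * N G 4)%N by lia.
rewrite e2 e3 PoszD PoszM; ring.
Qed.

End S.

Theorem mainTheorem5 (T : finType) (e : rel T) :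
  symmetric e -> irreflexive e ->
  (forall x : T, inS e 2 (sphere e [set: T] x)) ->
  euler_char e [set: T] = 0%R.
Proof. by move=> hs hi; apply: main_aux. Qed.
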